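(* Let $k\ge 2$ be an integer and $n\ge 1$, $\ell\ge 0$ integers. Let ${\sf S}_k(n,\ell)$ denote the number of $k$-noncrossing RNA structures on $\{1,\dots,n\}$ with exactly $\ell$ isolated vertices, ${\sf S}_k(n)=\sum_{\ell}{\sf S}_k(n,\ell)$ the total number of $k$-noncrossing RNA structures on $\{1,\dots,n\}$, and $f_k(m,\ell)$ the number of $k$-noncrossing digraphs on $\{1,\dots,m\}$ with exactly $\ell$ isolated vertices (with $f_k(m,\ell)=0$ if $\ell>m$). Then $$ {\sf S}_k(n,\ell)=\sum_{b=0}^{\lfloor (n-\ell)/2\rfloor}(-1)^b\binom{n-b}{b}f_k(n-2b,\ell), $$ and $$ {\sf S}_k(n)=\sum_{b=0}^{\lfloor n/2\rfloor}(-1)^b\binom{n-b}{b}\left\{\sum_{\ell=0}^{n-2b}f_k(n-2b,\ell)\right\}. $$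
   Context: A digraph on $\{1,\dots,n\}$ is a set of arcs $(i,j)$ with $1\le i<j\le n$. It is a $k$-noncrossing digraph if every vertex lies in at most one arc and there are no $k$ arcs $(i_1,j_1),\dots,(i_k,j_k)$ with $i_1<i_2<\dots<i_k<j_1<j_2<\dots<j_k$ (no $k$ mutually crossing arcs). A vertex is isolated if it lies in no arc. A $1$-arc is an arc of the form $(i,i+1)$. A $k$-noncrossing RNA structure is a $k$-noncrossing digraph containing no $1$-arc. Known facts (not part of the claim): $f_k(m,\ell)=\binom{m}{\ell}f_k(m-\ell,0)$, and $\sum_{m\ge 1}f_k(m,0)x^m/m!=\det[I_{i-j}(2x)-I_{i+j}(2x)]_{i,j=1}^{k-1}$, where $I_r(2x)=\sum_{j\ge 0}x^{2r+j}/(j!(r+j)!)$; multiplying by $e^x$ gives the exponential generating function of $\sum_{\ell}f_k(m,\ell)$. *)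

(* Defs.v *)
(* Vertices {1,...,n} are modelled by 'I_n = {0,...,n-1}
   (order-preserving shift by one). *)
From mathcomp Require Import all_boot all_order all_algebra.
Set Implicit Arguments. Unset Strict Implicit. Unset Printing Implicit Defensive.

Definition arcset (n : nat) := {set ('I_n * 'I_n)}.

Definition is_digraph n (G : arcset n) : bool :=
  [forall a in G, (a.1 < a.2)%N].

Definition deg_le1 n (G : arcset n) : bool :=
  [forall a in G, forall b in G, (a != b) ==>
     [&& a.1 != b.1, a.1 != b.2, a.2 != b.1 & a.2 != b.2]].

(* G contains k arcs (i_1,j_1),...,(i_k,j_k) with
   i_1 < ... < i_k < j_1 < ... < j_k *)
Definition has_k_crossing k n (G : arcset n) : bool :=
  [exists f : {ffun 'I_k -> 'I_n * 'I_n},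
     [&& [forall t : 'I_k, f t \in G],
         [forall s : 'I_k, forall t : 'I_k, ((s < t)%N ==>
             (((f s).1 < (f t).1)%N && ((f s).2 < (f t).2)%N))]
       & [forall s : 'I_k, forall t : 'I_k, ((f s).1 < (f t).2)%N]]].

Definition k_noncrossing_digraph k n (G : arcset n) : bool :=
  [&& is_digraph G, deg_le1 G & ~~ has_k_crossing k G].

Definition isolated n (G : arcset n) (v : 'I_n) : bool :=
  [forall a in G, (a.1 != v) && (a.2 != v)].

Definition n_isolated n (G : arcset n) : nat := #|[set v | isolated G v]|.

Definition has_1arc n (G : arcset n) : bool :=
  [exists a in G, (val a.2 == (val a.1).+1)].

Definition k_noncrossing_RNA k n (G : arcset n) : bool :=
  k_noncrossing_digraph k G && ~~ has_1arc G.

Definition fk (k m l : nat) : nat :=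
  #|[set G : arcset m | k_noncrossing_digraph k G && (n_isolated G == l)]|.

Definition Skl (k n l : nat) : nat :=
  #|[set G : arcset n | k_noncrossing_RNA k G && (n_isolated G == l)]|.

Definition Sk (k n : nat) : nat :=
  #|[set G : arcset n | k_noncrossing_RNA k G]|.

(* Main.v *)
Require Import Defs.
From mathcomp Require Import all_boot all_order all_algebra.
From mathcomp Require Import zify.
Set Implicit Arguments. Unset Strict Implicit. Unset Printing Implicit Defensive.

Definition shn (p v : nat) : nat := if v < p then v else v.+2.
Definition unshn (p v : nat) : nat := if v < p then v else v - 2.

Lemma shn_lt m p (v : 'I_m) : shn p v < m.+2.
Proof. have := ltn_ord v; rewrite /shn; case: ifP; lia. Qed.

Definition sh m p (v : 'I_m) : 'I_m.+2 := Ordinal (shn_lt p v).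
Definition shA m p (a : 'I_m * 'I_m) : 'I_m.+2 * 'I_m.+2 := (sh p a.1, sh p a.2).
Definition ep m p : 'I_m.+2 * 'I_m.+2 := (inord p, inord p.+1).
Definition ins m p (G : arcset m) : arcset m.+2 := ep m p |: (shA p @: G).
Definition con m p (G : arcset m.+2) : arcset m := [set a | shA p a \in G].

Lemma shn_eq p u v : (shn p u == shn p v) = (u == v).
Proof. rewrite /shn; case: ifP; case: ifP; lia. Qed.
Lemma shn_ltE p u v : (shn p u < shn p v) = (u < v).
Proof. rewrite /shn; case: ifP; case: ifP; lia. Qed.
Lemma shn_neq p u : (shn p u != p) && (shn p u != p.+1).
Proof. rewrite /shn; case: ifP; lia. Qed.

Lemma sh_eq m p (u v : 'I_m) : (sh p u == sh p v) = (u == v).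
Proof. by rewrite -val_eqE /= shn_eq. Qed.
Lemma sh_inj m p : injective (@sh m p).
Proof. by move=> u v /eqP; rewrite sh_eq => /eqP. Qed.
Lemma shA_eq m p (a b : 'I_m * 'I_m) : (shA p a == shA p b) = (a == b).
Proof. by case: a b => [a1 a2] [b1 b2]; rewrite /shA /= !xpair_eqE !sh_eq. Qed.
Lemma shA_inj m p : injective (@shA m p).
Proof. by move=> u v /eqP; rewrite shA_eq => /eqP. Qed.

Lemma ep1 m p : p <= m -> nat_of_ord (ep m p).1 = p.
Proof. by move=> h; rewrite /= inordK //; lia. Qed.
Lemma ep2 m p : p <= m -> nat_of_ord (ep m p).2 = p.+1.
Proof. by move=> h; rewrite /= inordK //; lia. Qed.
Arguments ep : simpl never.
Arguments shn : simpl never.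

Lemma sh_surj m p (v : 'I_m.+2) : p <= m -> val v != p -> val v != p.+1 ->
  exists u : 'I_m, v = sh p u.
Proof.
move=> hp h1 h2; have hu : unshn p v < m.
  by move: h1 h2 hp (ltn_ord v) => /= h1 h2 hp hv; rewrite /unshn; case: ifP; lia.
exists (Ordinal hu); apply: val_inj => /=; rewrite /shn /unshn.
by move: h1 h2 hp (ltn_ord v) => /= h1 h2 hp hv; case: ifP; case: ifP; lia.
Qed.

Lemma shA_neq m p (a : 'I_m * 'I_m) : p <= m -> shA p a != ep m p.
Proof.
move=> hp; apply/negP => /eqP [] /(congr1 val); rewrite /= inordK; last lia.
by move=> /eqP; have := shn_neq p a.1; case/andP => /negPf ->.
Qed.

Lemma con_ins m p (G : arcset m) : p <= m -> con p (ins p G) = G.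
Proof.
move=> hp; apply/setP => a; rewrite inE in_setU1 (negPf (shA_neq _ hp)) /=.
by rewrite mem_imset //; apply: shA_inj.
Qed.

Lemma sh_ep1 m p (u : 'I_m) : p <= m -> (sh p u == (ep m p).1) = false.
Proof.
move=> hp; apply/negbTE; rewrite -val_eqE /= ep1 //.
by case/andP: (shn_neq p u).
Qed.
Lemma sh_ep2 m p (u : 'I_m) : p <= m -> (sh p u == (ep m p).2) = false.
Proof.
move=> hp; apply/negbTE; rewrite -val_eqE /= ep2 //.
by case/andP: (shn_neq p u).
Qed.

Lemma ins_con m p (G : arcset m.+2) : p <= m -> ep m p \in G ->
  (forall a, a \in G -> a != ep m p -> [&& nat_of_ord a.1 != p,
     nat_of_ord a.1 != p.+1, nat_of_ord a.2 != p & nat_of_ord a.2 != p.+1]) ->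
  ins p (con p G) = G.
Proof.
move=> hp he hG; apply/setP => a; rewrite in_setU1.
case: (eqVneq a (ep m p)) => [->|ne] /=; first by rewrite he.
apply/imsetP/idP => [[a' ha' ->]|ha]; first by rewrite inE in ha'.
case/and4P: (hG a ha ne) => h1 h2 h3 h4.
have [u1 e1] := sh_surj hp h1 h2; have [u2 e2] := sh_surj hp h3 h4.
exists (u1, u2); last by rewrite /shA /= -e1 -e2 -surjective_pairing.
by rewrite inE /shA /= -e1 -e2 -surjective_pairing.
Qed.

Lemma deg_ep m p (G : arcset m.+2) : p <= m -> deg_le1 G -> ep m p \in G ->
  forall a, a \in G -> a != ep m p -> [&& nat_of_ord a.1 != p,
     nat_of_ord a.1 != p.+1, nat_of_ord a.2 != p & nat_of_ord a.2 != p.+1].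
Proof.
move=> hp /forall_inP hd he a ha ne.
have := forall_inP (hd a ha) _ he; rewrite ne /=.
by rewrite -!val_eqE /= ep1 // ep2.
Qed.

Lemma insS m p (G : arcset m) a : a \in G -> shA p a \in ins p G.
Proof. by move=> ha; rewrite in_setU1 imset_f ?orbT. Qed.

Lemma dig_ins m p (G : arcset m) : p <= m -> is_digraph (ins p G) = is_digraph G.
Proof.
move=> hp; apply/forall_inP/forall_inP => h a ha.
  by have := h (shA p a) (insS p ha); rewrite /= shn_ltE.
move: ha; rewrite in_setU1 => /orP[/eqP->|/imsetP[a' ha' ->]].
  by rewrite ep1 // ep2.
by rewrite /= shn_ltE; apply: h.
Qed.

Lemma deg_ins m p (G : arcset m) : p <= m -> deg_le1 (ins p G) = deg_le1 G.
Proof.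
move=> hp; apply/forall_inP/forall_inP => h a ha.
  apply/forall_inP => b hb.
  have := forall_inP (h (shA p a) (insS p ha)) (shA p b) (insS p hb).
  by rewrite /= shA_eq !sh_eq.
apply/forall_inP => b hb.
move: ha hb; rewrite !in_setU1 => /orP[/eqP->|/imsetP[a' ha' ->]]
   /orP[/eqP->|/imsetP[b' hb' ->]].
- by rewrite eqxx.
- by rewrite /= ![_ == sh _ _]eq_sym !sh_ep1 ?sh_ep2 // implybT.
- by rewrite /= !sh_ep1 ?sh_ep2 // implybT.
- by rewrite /= shA_eq !sh_eq; apply: (forall_inP (h a' ha')).
Qed.

Lemma cross_push n1 n2 k (h : 'I_n1 -> 'I_n2) (G1 : arcset n1) (G2 : arcset n2) :
  {mono h : x y / x < y} -> (forall a, a \in G1 -> (h a.1, h a.2) \in G2) ->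
  has_k_crossing k G1 -> has_k_crossing k G2.
Proof.
move=> hm hG /existsP[f /and3P[/forallP f1 /forallP f2 /forallP f3]].
apply/existsP; exists [ffun t => (h (f t).1, h (f t).2)]; apply/and3P; split.
- by apply/forallP => t; rewrite ffunE; exact: hG.
- by apply/forallP => s; apply/forallP => t; rewrite !ffunE /= !hm;
    exact: (forallP (f2 s) t).
- by apply/forallP => s; apply/forallP => t; rewrite !ffunE /= hm;
    exact: (forallP (f3 s) t).
Qed.

Lemma cross_pull n1 n2 k (h : 'I_n1 -> 'I_n2) (G1 : arcset n1) (G2 : arcset n2) :
  {mono h : x y / x < y} ->
  (forall a, a \in G2 -> exists a', a' \in G1 /\ a = (h a'.1, h a'.2)) ->
  has_k_crossing k G2 -> has_k_crossing k G1.
Proof.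
move=> hm hG /existsP[f /and3P[/forallP f1 /forallP f2 /forallP f3]].
have : forall t : 'I_k, exists a', a' \in G1 /\ f t = (h a'.1, h a'.2).
  by move=> t; exact: hG.
case/fin_all_exists => g hg.
apply/existsP; exists [ffun t => g t]; apply/and3P; split.
- by apply/forallP => t; rewrite ffunE; exact: (hg t).1.
- apply/forallP => s; apply/forallP => t; rewrite !ffunE.
  by have := forallP (f2 s) t; rewrite (hg s).2 (hg t).2 /= !hm.
- apply/forallP => s; apply/forallP => t; rewrite !ffunE.
  by have := forallP (f3 s) t; rewrite (hg s).2 (hg t).2 /= !hm.
Qed.

Lemma cross_ins m p k (G : arcset m) : 2 <= k -> p <= m ->
  has_k_crossing k (ins p G) = has_k_crossing k G.
Proof.
move=> hk hp; apply/idP/idP => hc.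
  apply: (@cross_pull _ _ _ (@sh m p) _ (ins p G :\ ep m p)).
  - by move=> x y; rewrite /= shn_ltE.
  - move=> a; rewrite !inE => /andP[ne /orP[/eqP e|/imsetP[a' ha' ->]]].
      by rewrite e eqxx in ne.
    by exists a'.
  case/existsP: hc => f /and3P[/forallP f1 f2 f3].
  apply/existsP; exists f; apply/and3P; split => //; apply/forallP => t.
  rewrite in_setD1 f1 andbT; apply/eqP => ft.
  have k0 : 0 < k by lia.
  have k1 : 1 < k by lia.
  case: (posnP t) => [t0|tpos].
  - have := forallP (forallP f2 t) (Ordinal k1).
    have := forallP (forallP f3 (Ordinal k1)) t.
    by rewrite ft ep1 // ep2 // t0 /=; move=> x /andP[y z]; lia.
  - have := forallP (forallP f2 (Ordinal k0)) t.
    have := forallP (forallP f3 t) (Ordinal k0).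
    by rewrite ft ep1 // ep2 // tpos /=; move=> x /andP[y z]; lia.
apply: (@cross_push _ _ _ (@sh m p) G) => //.
  by move=> x y; rewrite /= shn_ltE.
by move=> a ha; rewrite in_setU1 imset_f ?orbT.
Qed.

Lemma iso_ins m p (G : arcset m) : p <= m -> n_isolated (ins p G) = n_isolated G.
Proof.
move=> hp; rewrite /n_isolated -(card_imset _ (@sh_inj m p)); apply: eq_card => v.
rewrite inE; apply/idP/imsetP.
- move=> hv.
  have /andP[h1 h2] := forall_inP hv (ep m p) (setU11 _ _).
  have h1' : nat_of_ord v != p.
    by apply: contra h1 => /eqP e; apply/eqP/val_inj; rewrite /= ep1.
  have h2' : nat_of_ord v != p.+1.
    by apply: contra h2 => /eqP e; apply/eqP/val_inj; rewrite /= ep2.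
  have [u e] := sh_surj hp h1' h2'; exists u => //.
  rewrite inE; apply/forall_inP => a ha.
  have := forall_inP hv (shA p a) (insS p ha).
  by rewrite e /= !sh_eq.
- case=> u hu ->; rewrite inE in hu; apply/forall_inP => a.
  rewrite in_setU1 => /orP[/eqP->|/imsetP[a' ha' ->]].
    by rewrite ![_ == sh _ _]eq_sym sh_ep1 ?sh_ep2.
  by rewrite /= !sh_eq; exact: (forall_inP hu a' ha').
Qed.

Lemma card_ins m p (B : arcset m) : p <= m -> #|ins p B| = #|B|.+1.
Proof.
move=> hp; rewrite cardsU1 card_imset; last exact: shA_inj.
suff -> : ep m p \notin shA p @: B by [].
by apply/imsetP => [[a _ e]]; move: (shA_neq a hp); rewrite -e eqxx.
Qed.

Lemma kncd_ins k m p (G : arcset m) : 2 <= k -> p <= m ->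
  k_noncrossing_digraph k (ins p G) = k_noncrossing_digraph k G.
Proof.
by move=> hk hp; rewrite /k_noncrossing_digraph dig_ins // deg_ins // cross_ins.
Qed.

Definition ones n (G : arcset n) : arcset n :=
  [set a in G | nat_of_ord a.2 == (nat_of_ord a.1).+1].

Lemma inonesE n (G : arcset n) a :
  (a \in ones G) = (a \in G) && (nat_of_ord a.2 == (nat_of_ord a.1).+1).
Proof. by rewrite inE. Qed.

Lemma shn_succ2 p u v : v == u.+1 -> v != p -> shn p v == (shn p u).+1.
Proof. rewrite /shn; case: ifP; case: ifP; lia. Qed.

Lemma ones_ins m p (G B : arcset m) : p <= m -> B \subset ones G ->
  [forall a in B, nat_of_ord a.2 != p] -> ins p B \subset ones (ins p G).
Proof.
move=> hp hB hv; apply/subsetP => a; rewrite in_setU1.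
case/orP => [/eqP->|/imsetP[a' ha' ->]].
  by rewrite inonesE setU11 /= !inordK; lia.
have := subsetP hB a' ha'; rewrite inonesE => /andP[hg ho].
have := forall_inP hv a' ha'.
rewrite inonesE insS //=; move=> hv'; exact: shn_succ2 ho hv'.
Qed.

Lemma shn_succ p u v : shn p v == (shn p u).+1 -> (v == u.+1) && (v != p).
Proof. rewrite /shn; case: ifP; case: ifP; lia. Qed.

Lemma ones_con m p (G B : arcset m.+2) : B \subset ones G ->
  (con p B \subset ones (con p G)) && [forall a in con p B, nat_of_ord a.2 != p].
Proof.
move=> hB; apply/andP; split.
  apply/subsetP => a; rewrite inE => ha.
  have := subsetP hB _ ha; rewrite inonesE => /andP[hg /shn_succ /andP[h1 _]].
  by rewrite inonesE inE hg.
apply/forall_inP => a; rewrite inE => ha.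
by have := subsetP hB _ ha; rewrite inonesE => /andP[hg /shn_succ /andP[_ h2]].
Qed.

Definition D k l n := [set G : arcset n | k_noncrossing_digraph k G && (n_isolated G == l)].
Definition Gs k l n b := [set GB : arcset n * arcset n |
   [&& GB.1 \in D k l n, GB.2 \subset ones GB.1 & #|GB.2| == b]].
Definition vset m (B : arcset m) := [set p : 'I_m.+1 | [forall a in B, nat_of_ord a.2 != nat_of_ord p]].
Definition Xs k l m b := [set x : (arcset m.+2 * arcset m.+2) * ('I_m.+2 * 'I_m.+2) |
   (x.1 \in Gs k l m.+2 b.+1) && (x.2 \in x.1.2)].
Definition Ys k l m b := [set y : (arcset m * arcset m) * 'I_m.+1 |
   (y.1 \in Gs k l m b) && (y.2 \in vset y.1.2)].
Definition psi m (y : (arcset m * arcset m) * 'I_m.+1) :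
  (arcset m.+2 * arcset m.+2) * ('I_m.+2 * 'I_m.+2) :=
  ((ins y.2 y.1.1, ins y.2 y.1.2), ep m y.2).
Definition phi m (x : (arcset m.+2 * arcset m.+2) * ('I_m.+2 * 'I_m.+2)) :
  (arcset m * arcset m) * 'I_m.+1 :=
  ((con x.2.1 x.1.1, con x.2.1 x.1.2), inord x.2.1).

Lemma phi_psi m y : @phi m (psi y) = y.
Proof.
case: y => [[G B] p]; rewrite /phi /psi /=.
have hp : nat_of_ord p <= m by have := ltn_ord p; lia.
rewrite ep1 // !con_ins //; congr (_, _); apply: val_inj; rewrite /= inordK //.
Qed.

Lemma Xs_psi k l m b : 2 <= k -> Xs k l m b = @psi m @: Ys k l m b.
Proof.
move=> hk; apply/setP => x; apply/idP/imsetP.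
- case: x => [[G B] e]; rewrite inE /= => /andP[].
  rewrite inE /= => /and3P[hG hB hb] he.
  have := subsetP hB _ he; rewrite inonesE => /andP[heG he2].
  have hp : nat_of_ord e.1 <= m by have := ltn_ord e.2; lia.
  have eep : e = ep m e.1.
    case: e he2 {he heG hp} => e1 e2 /= /eqP he2.
    by congr (_, _); apply: val_inj; rewrite /= inordK //; have := ltn_ord e2; lia.
  move: hG; rewrite inE => /andP[hkn hiso].
  have hdeg : deg_le1 G by case/and3P: hkn.
  have hdG := deg_ep hp hdeg.
  have heG' : ep m e.1 \in G by rewrite -eep.
  have heB' : ep m e.1 \in B by rewrite -eep.
  have iG : ins e.1 (con e.1 G) = G := ins_con hp heG' (hdG heG').
  have iB : ins e.1 (con e.1 B) = B.
    apply: ins_con => // a ha; apply: (hdG heG').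
    by have := subsetP hB _ ha; rewrite inonesE => /andP[].
  exists (phi ((G, B), e)); last first.
    rewrite /psi /phi /= inordK; last exact: hp.
    by rewrite iG iB -eep.
  rewrite inE /= inE /=; case/andP: (ones_con e.1 hB) => h1 h2.
  apply/andP; split.
    rewrite h1 /=; apply/andP; split.
      rewrite inE -(kncd_ins _ hk hp) iG hkn /=.
      by rewrite -(iso_ins _ hp) iG.
    by move: hb; rewrite -{1}iB card_ins.
  rewrite inE; apply/forall_inP => a ha; rewrite inordK; last exact: hp.
  exact: (forall_inP h2 a ha).
- case=> y; case: y => [[G B] p]; rewrite inE /= => /andP[].
  rewrite inE /= => /and3P[hG hB hb] hv ->.
  have hp : nat_of_ord p <= m by have := ltn_ord p; lia.
  move: hG; rewrite inE => /andP[hkn hiso].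
  rewrite /psi /= inE /= inE /=; apply/andP; split; last exact: setU11.
  rewrite inE /= kncd_ins // hkn iso_ins // hiso card_ins // (eqP hb) eqxx /=.
  by rewrite andbT; apply: ones_ins => //; rewrite inE in hv.
Qed.

Lemma ltn_ordS n (i : 'I_n) : nat_of_ord i < n.+1.
Proof. exact: ltnW (ltn_ord i). Qed.

Lemma card_dep (T1 T2 : finType) (A : {set T1}) (F : T1 -> {set T2}) :
  #|[set x : T1 * T2 | (x.1 \in A) && (x.2 \in F x.1)]| = \sum_(i in A) #|F i|.
Proof.
rewrite -sum1_card big_mkcond /=.
rewrite (eq_bigr (fun p => (fun i j => if (i \in A) && (j \in F i) then 1 else 0) p.1 p.2));
  last by move=> x _; rewrite inE.
rewrite -(pair_bigA _ (fun i j => if (i \in A) && (j \in F i) then 1 else 0)) /=.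
rewrite [RHS]big_mkcond /=; apply: eq_bigr => i _.
case: (boolP (i \in A)) => hi /=.
  by rewrite -sum1_card [RHS]big_mkcond.
by rewrite big1_eq.
Qed.

Lemma card_Xs k l m b : #|Xs k l m b| = #|Gs k l m.+2 b.+1| * b.+1.
Proof.
rewrite (_ : Xs k l m b = [set x | (x.1 \in Gs k l m.+2 b.+1) &&
   (x.2 \in (fun GB : arcset m.+2 * arcset m.+2 => GB.2) x.1)]) //.
rewrite card_dep -sum_nat_const; apply: eq_bigr => i.
by rewrite inE => /and3P[_ _ /eqP].
Qed.

Lemma card_vset m (G B : arcset m) : B \subset ones G -> #|vset B| = m.+1 - #|B|.
Proof.
move=> hB; have hc := cardsC (vset B); rewrite card_ord in hc.
suff : #|~: vset B| = #|B| by lia.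
have -> : ~: vset B = [set (inord (nat_of_ord a.2) : 'I_m.+1) | a in B].
  apply/setP => p; rewrite !inE; apply/idP/imsetP.
    case/forall_inPn => a ha; rewrite negbK => /eqP e; exists a => //.
    apply: val_inj; rewrite /= inordK; first exact: (esym e). exact: ltn_ordS.
  case=> a ha ->; apply/forall_inPn; exists a => //.
  by rewrite negbK inordK // ltn_ordS.
apply: card_in_imset => a a' ha ha' e.
have := subsetP hB _ ha; have := subsetP hB _ ha'.
rewrite !inonesE => /andP[_ /eqP h'] /andP[_ /eqP h].
have e2 : nat_of_ord a.2 = nat_of_ord a'.2.
  by have := congr1 val e; rewrite /= !inordK // ltn_ordS.
case: a a' {ha ha' e} h h' e2 => [a1 a2] [a1' a2'] /= h h' e2.
by congr (_, _); apply: val_inj => /=; lia.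
Qed.

Lemma card_Ys k l m b : #|Ys k l m b| = #|Gs k l m b| * (m.+1 - b).
Proof.
rewrite (_ : Ys k l m b = [set y | (y.1 \in Gs k l m b) &&
   (y.2 \in (fun GB : arcset m * arcset m => vset GB.2) y.1)]) //.
rewrite (card_dep _ (fun GB : arcset m * arcset m => vset GB.2)) -sum_nat_const; apply: eq_bigr => i.
by rewrite inE => /and3P[_ hB /eqP hb]; rewrite (card_vset hB) hb.
Qed.

Lemma g_rec k l m b : 2 <= k ->
  #|Gs k l m.+2 b.+1| * b.+1 = #|Gs k l m b| * (m.+1 - b).
Proof.
move=> hk; rewrite -card_Xs -card_Ys Xs_psi // card_in_imset //.
by move=> y1 y2 _ _ e; rewrite -(phi_psi y1) e phi_psi.
Qed.

Lemma g_base k l n : #|Gs k l n 0| = fk k n l.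
Proof.
have -> : fk k n l = #|D k l n| by [].
rewrite -(@card_imset _ _ (fun G : arcset n => (G, set0 : arcset n)) (D k l n));
  last by move=> G1 G2 [].
apply: eq_card => GB; rewrite inE; apply/idP/imsetP.
  case/and3P => hD _; rewrite cards_eq0 => /eqP e0.
  by exists GB.1 => //; rewrite -e0 -surjective_pairing.
by case=> G hG ->; rewrite /= hG cards0 eqxx sub0set.
Qed.

Lemma g_small k l n b : n < 2 -> #|Gs k l n b.+1| = 0.
Proof.
move=> hn; apply/eqP; rewrite cards_eq0; apply/eqP/setP => GB.
rewrite inE in_set0; apply/negP => /and3P[_ hB hb].
have : 0 < #|GB.2| by rewrite (eqP hb).
case/card_gt0P => a ha; have := subsetP hB _ ha; rewrite inonesE => /andP[_ /eqP h].
by have := ltn_ord a.2; lia.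
Qed.

Lemma g_formula k l b : 2 <= k -> forall n,
  #|Gs k l n b| = 'C(n - b, b) * fk k (n - 2 * b) l.
Proof.
move=> hk; elim: b => [|b IH] n.
  by rewrite g_base bin0 !subn0 mul1n.
case: n => [|[|m]].
- by rewrite g_small // bin_small ?mul0n.
- by rewrite g_small // bin_small ?mul0n.
have h := g_rec l m b hk; rewrite IH in h.
rewrite (_ : m.+2 - b.+1 = m.+1 - b); last lia.
rewrite (_ : m.+2 - 2 * b.+1 = m - 2 * b); last lia.
apply/eqP; rewrite -(eqn_pmul2r (ltn0Sn b)) h; apply/eqP.
rewrite [RHS]mulnAC (mulnC _ b.+1) -mul_bin_diag.
rewrite (_ : (m.+1 - b).-1 = m - b); last lia.
by rewrite mulnAC (mulnC _ (m.+1 - b)).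
Qed.

Lemma iso_le n (G : arcset n) : n_isolated G <= n.
Proof. by rewrite /n_isolated -[X in _ <= X]card_ord max_card. Qed.

Lemma fk_zero k m l : m < l -> fk k m l = 0.
Proof.
move=> h; apply/eqP; rewrite cards_eq0; apply/eqP/setP => G.
rewrite inE in_set0; apply/negP => /andP[_ /eqP e].
by have := iso_le G; lia.
Qed.

Lemma has_1arcE n (G : arcset n) : ~~ has_1arc G = (#|ones G| == 0).
Proof.
rewrite cards_eq0; apply/negP/eqP.
  move=> h; apply/setP => a; rewrite inonesE in_set0; apply/negP => ha.
  by apply: h; apply/existsP; exists a.
move=> e /existsP[a ha]; have : a \in ones G by rewrite inonesE.
by rewrite e in_set0.
Qed.

Lemma Skl_sum k n l : Skl k n l = \sum_(G in D k l n) (#|ones G| == 0).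
Proof.
rewrite /Skl -sum1_card big_mkcond [RHS]big_mkcond /=; apply: eq_bigr => G _.
rewrite !inE /k_noncrossing_RNA has_1arcE.
by case: (k_noncrossing_digraph k G); case: (n_isolated G == l); case: (#|ones G| == 0).
Qed.

Lemma Gs_sum k l n b : #|Gs k l n b| = \sum_(G in D k l n) 'C(#|ones G|, b).
Proof.
rewrite (_ : Gs k l n b = [set x | (x.1 \in D k l n) &&
   (x.2 \in (fun G : arcset n => [set B : arcset n | (B \subset ones G) && (#|B| == b)]) x.1)]).
  rewrite (card_dep _ (fun G : arcset n => [set B : arcset n | (B \subset ones G) && (#|B| == b)])).
  by apply: eq_bigr => G _; rewrite cards_draws.
by apply/setP => x; rewrite !inE.
Qed.

Lemma ones_le n (G : arcset n) : #|ones G| <= n * n.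
Proof. have := max_card (mem (ones G)); rewrite card_prod card_ord. exact. Qed.

Lemma Sk_sum k n : Sk k n = \sum_(0 <= l < n.+1) Skl k n l.
Proof.
rewrite /Sk /Skl -sum1_card.
rewrite (eq_bigr (fun G => \sum_(0 <= l < n.+1) (n_isolated G == l : nat))); last first.
  move=> G _; rewrite (bigD1_seq (n_isolated G)) ?iota_uniq //=; last first.
    by rewrite mem_iota /= add0n ltnS iso_le.
  rewrite eqxx big1 // => l /negbTE; rewrite eq_sym => ->; by [].
rewrite exchange_big /=; apply: eq_bigr => l _.
rewrite -sum1_card big_mkcond [RHS]big_mkcond /=; apply: eq_bigr => G _.
rewrite !inE.
by case: (k_noncrossing_RNA k G); case: (n_isolated G == l).
Qed.

Import GRing.Theory.
Local Open Scope ring_scope.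

Lemma alt_sum (c N : nat) : (c < N)%N ->
  \sum_(0 <= b < N) (-1) ^+ b * ('C(c, b))%:Z = (c == 0%N)%:Z.
Proof.
move=> hN; have := exprDn (1 : int) (-1) c; rewrite subrr expr0n natz => ->.
rewrite -(big_mkord xpredT (fun i => (1 ^+ (c - i) * (-1) ^+ i) *+ 'C(c, i))).
rewrite (@big_cat_nat _ _ _ c.+1) //=.
rewrite [X in _ + X]big_nat_cond [X in _ + X]big1 ?addr0; last first.
  by move=> b /andP[/andP[hb _] _]; rewrite bin_small // mulr0.
by apply: eq_bigr => i _; rewrite expr1n mul1r -natz mulr_natr.
Qed.

Lemma part1_full k n l : (2 <= k)%N -> (Skl k n l)%:Z =
  \sum_(0 <= b < (n * n).+1) (-1) ^+ b * ('C(n - b, b))%:Z * (fk k (n - 2 * b) l)%:Z.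
Proof.
move=> hk; rewrite Skl_sum -natz natr_sum.
rewrite (eq_bigr (fun G => \sum_(0 <= b < (n * n).+1) (-1) ^+ b * ('C(#|ones G|, b))%:Z));
  last by move=> G _; rewrite alt_sum ?ltnS ?ones_le // natz.
rewrite exchange_big /=; apply: eq_bigr => b _.
rewrite -mulr_sumr -mulrA; congr (_ * _).
rewrite -PoszM -g_formula // Gs_sum -natz natr_sum.
by apply: eq_bigr => G _; rewrite natz.
Qed.

Lemma trim k n l M : ((n - l) %/ 2 < M)%N -> (M <= (n * n).+1)%N ->
  \sum_(0 <= b < (n * n).+1) (-1) ^+ b * ('C(n - b, b))%:Z * (fk k (n - 2 * b) l)%:Z =
  \sum_(0 <= b < M) (-1) ^+ b * ('C(n - b, b))%:Z * (fk k (n - 2 * b) l)%:Z.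
Proof.
move=> h1 h2; rewrite (@big_cat_nat _ _ _ M) //=.
rewrite [X in _ + X]big_nat_cond [X in _ + X]big1 ?addr0 // => b /andP[/andP[hb _] _].
case: (ltnP n (2 * b)) => h.
  by rewrite bin_small ?mulr0 ?mul0r //; lia.
by rewrite fk_zero ?mulr0 //; lia.
Qed.

Theorem theorem3p1 (k n l : nat) (hk : (2 <= k)%N) (hn : (1 <= n)%N) :
  ((Skl k n l)%:Z =
     \sum_(0 <= b < ((n - l) %/ 2).+1)
        (-1) ^+ b * ('C(n - b, b))%:Z * (fk k (n - 2 * b) l)%:Z)
  /\
  ((Sk k n)%:Z =
     \sum_(0 <= b < (n %/ 2).+1)
        (-1) ^+ b * ('C(n - b, b))%:Z *
          (\sum_(0 <= l' < (n - 2 * b).+1) (fk k (n - 2 * b) l')%:Z)).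
Proof.
split.
  rewrite part1_full // (trim _ _ (M := ((n - l) %/ 2).+1)) //.
  rewrite ltnS; apply: leq_trans (leq_div _ _) _; rewrite (leq_trans (leq_subr _ _)) //.
  by rewrite leq_pmull.
rewrite Sk_sum -natz natr_sum.
rewrite (eq_bigr (fun l => \sum_(0 <= b < (n %/ 2).+1)
   (-1) ^+ b * ('C(n - b, b))%:Z * (fk k (n - 2 * b) l)%:Z)); last first.
  move=> l' _; rewrite natz part1_full // (trim _ _ (M := (n %/ 2).+1)) //.
    by rewrite ltnS leq_div2r // leq_subr.
  rewrite ltnS; apply: leq_trans (leq_div _ _) _.
  by rewrite leq_pmull.
rewrite exchange_big /=; apply: eq_bigr => b _.
rewrite mulr_sumr (@big_cat_nat _ _ _ (n - 2 * b).+1) //=; last by rewrite ltnS leq_subr.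
rewrite [X in _ + X]big_nat_cond [X in _ + X]big1 ?addr0 // => l' /andP[/andP[hl _] _].
by rewrite fk_zero ?mulr0.
Qed.
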